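(* If an ST graph $G$ with no twins is DI, then its set of thin arcs is a perfect matching of $G$.
   Context: A digraph is a finite vertex set $V$ with arc set $E\subseteq V\times V$. $N^+(v),N^-(v)$ are out-/in-neighborhoods, $N(v)=N^+(v)\cup N^-(v)$, $d(v)=|N(v)|$. Source: $N^-(v)=\emptyset$; sink: $N^+(v)=\emptyset$; ST graph: every vertex is a source or a sink. Two distinct vertices are twins if $N(v)=N(w)$. An arc $v\to w$ is disimplicial if $x\to y$ is an arc for all $x\in N^-(w)$, $y\in N^+(v)$. A diclique is a pair $(V,W)$ of nonempty vertex sets, written $V\to W$, with $v\to w$ an arc for all $v\in V,w\in W$; it contains an arc $v\to w$ if $v\in V,w\in W$; it is maximal if not properly contained componentwise in another diclique; reduced if maximal and containing a disimplicial arc. A digraph is diclique irreducible (DI) if every maximal diclique is reduced. The thin neighbor $\theta(v)$ is the unique $x\in N(v)$ with $d(x)<d(z)$ for all $z\in N(v)\setminus\{x\}$ (undefined if none); an arc $v\to w$ is thin if $\theta(v)=w$ and $\theta(w)=v$. A matching is a set of arcs no two sharing an endpoint; it is perfect if every vertex is an endpoint of one of its arcs. *)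

(* Defs.v *)
From mathcomp Require Import all_boot.
Set Implicit Arguments. Unset Strict Implicit. Unset Printing Implicit Defensive.

Section Digraph.
Variables (V : finType) (E : rel V).

Definition outN (v : V) : {set V} := [set w | E v w].
Definition inN (v : V) : {set V} := [set u | E u v].
Definition nbhd (v : V) : {set V} := outN v :|: inN v.
Definition deg (v : V) : nat := #|nbhd v|.

Definition is_source (v : V) : Prop := inN v = set0.
Definition is_sink (v : V) : Prop := outN v = set0.
Definition ST_graph : Prop := forall v, is_source v \/ is_sink v.

Definition twins (v w : V) : Prop := v <> w /\ nbhd v = nbhd w.
Definition no_twins : Prop := forall v w, ~ twins v w.

Definition disimplicial (v w : V) : Prop :=
  E v w /\ forall x y, x \in inN w -> y \in outN v -> E x y.

Definition diclique (A B : {set V}) : Prop :=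
  A != set0 /\ B != set0 /\ forall a b, a \in A -> b \in B -> E a b.

Definition contains_arc (A B : {set V}) (v w : V) : Prop := v \in A /\ w \in B.

Definition maximal_diclique (A B : {set V}) : Prop :=
  diclique A B /\
  forall A' B', diclique A' B' -> A \subset A' -> B \subset B' -> A = A' /\ B = B'.

Definition reduced_diclique (A B : {set V}) : Prop :=
  maximal_diclique A B /\
  exists v w, contains_arc A B v w /\ disimplicial v w.

Definition DI : Prop := forall A B, maximal_diclique A B -> reduced_diclique A B.

Definition thin_nb (v x : V) : Prop :=
  x \in nbhd v /\ forall z, z \in nbhd v -> z != x -> deg x < deg z.

Definition thin_arc (v w : V) : Prop := E v w /\ thin_nb v w /\ thin_nb w v.

Definition matching (M : V * V -> Prop) : Prop :=
  (forall p, M p -> E p.1 p.2) /\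
  (forall p q, M p -> M q -> p <> q ->
     [disjoint [set p.1; p.2] & [set q.1; q.2]]).

Definition perfect_matching (M : V * V -> Prop) : Prop :=
  matching M /\ forall v, exists p, M p /\ (v = p.1 \/ v = p.2).

End Digraph.

(* Main.v *)
Require Import Defs.
From mathcomp Require Import all_boot.
Set Implicit Arguments. Unset Strict Implicit.

Lemma st_src (V : finType) (E : rel V) : ST_graph E -> forall v w, E v w -> inN E v = set0.
Proof.
move=> ST v w Evw; case: (ST v) => // H.
have : w \in outN E v by rewrite /outN inE.
by rewrite /is_sink in H; rewrite H inE.
Qed.

Lemma st_snk (V : finType) (E : rel V) : ST_graph E -> forall v w, E v w -> outN E w = set0.
Proof.
move=> ST v w Evw; case: (ST w) => // H.
have : v \in inN E w by rewrite /inN inE.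
by rewrite /is_source in H; rewrite H inE.
Qed.

Lemma st_nbhd_src (V : finType) (E : rel V) : ST_graph E -> forall v w, E v w -> nbhd E v = outN E v.
Proof. by move=> ST v w Evw; rewrite /nbhd (st_src ST Evw) setU0. Qed.

Lemma st_nbhd_snk (V : finType) (E : rel V) : ST_graph E -> forall v w, E v w -> nbhd E w = inN E w.
Proof. by move=> ST v w Evw; rewrite /nbhd (st_snk ST Evw) set0U. Qed.

Lemma nt_eq (V : finType) (E : rel V) : no_twins E -> forall a b, nbhd E a = nbhd E b -> a = b.
Proof.
move=> NT a b H; case: (eqVneq a b) => // ne; exfalso.
by apply: (NT a b); split => //; apply/eqP.
Qed.

Lemma disimp_thin (V : finType) (E : rel V) : ST_graph E -> no_twins E ->
  forall v w, disimplicial E v w -> thin_nb E v w /\ thin_nb E w v.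
Proof.
move=> ST NT v w [Evw D].
have Nv := st_nbhd_src ST Evw. have Nw := st_nbhd_snk ST Evw.
split; split.
- by rewrite Nv /outN inE.
- move=> z; rewrite Nv /outN inE => Evz nzw.
  have Nz := st_nbhd_snk ST Evz.
  rewrite /deg Nz Nw.
  have sub : inN E w \subset inN E z.
    apply/subsetP => x xw; rewrite /inN inE; apply: D => //; by rewrite /outN inE.
  rewrite ltn_neqAle subset_leq_card // andbT.
  apply/negP => /eqP hc.
  have e : inN E w = inN E z by apply/eqP; rewrite eqEcard sub /= hc leqnn.
  move/eqP: nzw; apply; apply: (nt_eq NT); by rewrite Nz Nw e.
- by rewrite Nw /inN inE.
- move=> z; rewrite Nw /inN inE => Ezw nzv.
  have Nz := st_nbhd_src ST Ezw.
  rewrite /deg Nz Nv.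
  have sub : outN E v \subset outN E z.
    apply/subsetP => y yv; rewrite /outN inE; apply: D => //; by rewrite /inN inE.
  rewrite ltn_neqAle subset_leq_card // andbT.
  apply/negP => /eqP hc.
  have e : outN E v = outN E z by apply/eqP; rewrite eqEcard sub /= hc leqnn.
  move/eqP: nzv; apply; apply: (nt_eq NT); by rewrite Nz Nv e.
Qed.

Lemma exists_disimp (V : finType) (E : rel V) :
  (forall v : V, nbhd E v != set0) -> ST_graph E -> no_twins E -> DI E ->
  forall u, exists a b, disimplicial E a b /\ (u = a \/ u = b).
Proof.
move=> NE ST NT DI u; case: (ST u) => Hu.
- rewrite /is_source in Hu.
  set A := [set x | outN E u \subset outN E x].
  have Nu : nbhd E u = outN E u by rewrite /nbhd Hu setU0.
  have Bne : outN E u != set0 by move: (NE u); rewrite Nu.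
  have dA : diclique E A (outN E u).
    split; [apply/set0Pn; exists u; rewrite inE subxx //| split => // a b].
    rewrite inE => /subsetP s bu. have := s b bu. by rewrite /outN inE.
  have mA : maximal_diclique E A (outN E u).
    split => // A' B' [_ [_ H]] sA sB.
    have uA' : u \in A' by apply: (subsetP sA); rewrite inE subxx.
    have eB : outN E u = B'.
      apply/eqP; rewrite eqEsubset sB /=. apply/subsetP => b bB.
      rewrite /outN inE; exact: H.
    split => //. apply/eqP; rewrite eqEsubset sA /=. apply/subsetP => x xA.
    rewrite inE. apply/subsetP => y yu. rewrite /outN inE. apply: H => //. by rewrite -eB.
  have [_ [a [b [[aA bB] Dab]]]] := DI _ _ mA.
  exists a, b; split => //; left.
  case: Dab => Eab D.
  apply: (nt_eq NT). rewrite Nu (st_nbhd_src ST Eab).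
  apply/eqP; rewrite eqEsubset; apply/andP; split.
  + by move: aA; rewrite inE.
  + apply/subsetP => y ya. rewrite /outN inE. apply: D => //. rewrite /inN inE.
    by move: bB; rewrite /outN inE.
- rewrite /is_sink in Hu.
  set B := [set y | inN E u \subset inN E y].
  have Nu : nbhd E u = inN E u by rewrite /nbhd Hu set0U.
  have Ane : inN E u != set0 by move: (NE u); rewrite Nu.
  have dA : diclique E (inN E u) B.
    split => //; split; [apply/set0Pn; exists u; rewrite inE subxx //| move=> a b].
    move=> au; rewrite inE => /subsetP s. have := s a au. by rewrite /inN inE.
  have mA : maximal_diclique E (inN E u) B.
    split => // A' B' [_ [_ H]] sA sB.
    have uB' : u \in B' by apply: (subsetP sB); rewrite inE subxx.
    have eA : inN E u = A'.
      apply/eqP; rewrite eqEsubset sA /=. apply/subsetP => a aA.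
      rewrite /inN inE; exact: H.
    split => //. apply/eqP; rewrite eqEsubset sB /=. apply/subsetP => y yB.
    rewrite inE. apply/subsetP => x xu. rewrite /inN inE. apply: H => //. by rewrite -eA.
  have [_ [a [b [[aA bB] Dab]]]] := DI _ _ mA.
  exists a, b; split => //; right.
  case: Dab => Eab D.
  apply: (nt_eq NT). rewrite Nu (st_nbhd_snk ST Eab).
  apply/eqP; rewrite eqEsubset; apply/andP; split.
  + by move: bB; rewrite inE.
  + apply/subsetP => x xb. rewrite /inN inE. apply: D => //. rewrite /outN inE.
    by move: aA; rewrite /inN inE.
Qed.

Lemma tn_uniq (V : finType) (E : rel V) v x y :
  thin_nb E v x -> thin_nb E v y -> x = y.
Proof.
move=> [xv Hx] [yv Hy]; case: (eqVneq x y) => // ne.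
have h1 := Hx y yv (ltac:(by rewrite eq_sym)).
have h2 := Hy x xv ne.
by move: (ltn_trans h1 h2); rewrite ltnn.
Qed.

Theorem lemma15 (V : finType) (E : rel V) :
  (forall v : V, nbhd E v != set0) ->
  ST_graph E -> no_twins E -> DI E ->
  perfect_matching E (fun p : V * V => thin_arc E p.1 p.2).
Proof.
move=> NE ST NT DI; split; last first.
  move=> u; have [a [b [D e]]] := exists_disimp NE ST NT DI u.
  exists (a, b); have [t1 t2] := disimp_thin ST NT D.
  by split => //; split => //; case: D.
split; first by move=> p [].
move=> [a b] [c d] /= [Eab [ta ta']] [Ecd [tc tc']] neq.
rewrite disjoint_subset; apply/subsetP => x; rewrite !inE; case/orP => /eqP ->; apply/negP; case/orP => /eqP e.
- subst c; apply: neq; by rewrite (tn_uniq ta tc).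
- subst d; have := st_src ST Eab; move/setP/(_ c); by rewrite !inE Ecd.
- subst c; have := st_src ST Ecd; move/setP/(_ a); by rewrite !inE Eab.
- subst d; apply: neq; by rewrite (tn_uniq ta' tc').
Qed.
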